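(* Let $M$ be a real symmetric $n\times n$ matrix with eigenvalues $\lambda_1\le\lambda_2\le\cdots\le\lambda_n$ (listed with multiplicity), and let $\Gamma=(G,\sigma)$, $G=(V,E)$, be its induced signed graph. Fix $k\in\{1,\dots,n\}$ and let $f_k$ be an eigenfunction with $Mf_k=\lambda_kf_k$. Then $$\mathfrak{S}(f_k)\le k+r-1\quad\text{and}\quad \mathfrak{W}(f_k)\le k+c-1,$$ where $r$ is the multiplicity of $\lambda_k$ and $c$ is the number of connected components of $G$. In particular, if $G$ is connected then $\mathfrak{W}(f_k)\le k$. If moreover $f_k$ has minimal support, then $\mathfrak{S}(f_k)\le k$.
   Context: All graphs are finite, simple and undirected. A signed graph $\Gamma=(G,\sigma)$ is a graph $G=(V,E)$ with a signature $\sigma:E\to\{+1,-1\}$; write $\sigma_{xy}=\sigma(\{x,y\})$ and $x\sim y$ if $\{x,y\}\in E$. The induced signed graph of a real symmetric $n\times n$ matrix $M=(M_{ij})$ has vertex set $V=\{x_1,\dots,x_n\}$, edge $\{x_i,x_j\}$ iff $i\ne j$ and $M_{ij}\neq0$, and sign $\sigma_{x_ix_j}=-M_{ij}/|M_{ij}|$. Functions $V\to\mathbb R$ are identified with vectors in $\mathbb R^n$; an eigenfunction is a nonzero eigenvector. An eigenfunction $f$ has minimal support if every eigenfunction $g$ for the same eigenvalue with $\mathrm{supp}(g)\subseteq\mathrm{supp}(f)$ satisfies $\mathrm{supp}(g)=\mathrm{supp}(f)$, where $\mathrm{supp}(f)=\{x: f(x)\ne0\}$. A walk is a sequence of vertices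 $y_1,\dots,y_m$ ($m\ge2$) with $y_j\sim y_{j+1}$ for all $j$. For $f:V\to\mathbb R$ let $\Omega=\{x\in V: f(x)\ne0\}$. An S-walk of $f$ is a walk with $f(y_j)\sigma_{y_jy_{j+1}}f(y_{j+1})>0$ for all $j$. A W-walk of $f$ is a walk such that for any two consecutive nonzeros $y_i,y_j$ ($i<j$, $f(y_i)\ne0\ne f(y_j)$, $f(y_l)=0$ for $i<l<j$) one has $f(y_i)\sigma_{y_iy_{i+1}}\cdots\sigma_{y_{j-1}y_j}f(y_j)>0$ (so every walk containing at most one nonzero of $f$ is a W-walk). On $\Omega$ define $x R_S y$ (resp. $x R_W y$) iff $x=y$ or some S-walk (resp. W-walk) of $f$ connects $x$ and $y$; these are equivalence relations. The strong nodal domains of $f$ are the induced subgraphs of $G$ on the $R_S$-classes, and $\mathfrak{S}(f)$ is their number. If $W_1,\dots,W_q$ are the $R_W$-classes, the weak nodal domains of $f$ are the induced subgraphs on $W_i^0=W_i\cup\{x\in V:\text{there is a W-walk of } f \text{ from } x \text{ to some vertex of } W_i\}$, and $\mathfrak{W}(f)=q$. *)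

(* Defs.v *)
From HB Require Import structures.
From mathcomp Require Import all_boot all_order all_algebra.
From mathcomp Require Import boolp reals.
Set Implicit Arguments. Unset Strict Implicit. Unset Printing Implicit Defensive.
Import Order.TTheory GRing.Theory Num.Theory.
Local Open Scope ring_scope.

Section SignedGraph.
Variables (R : realType) (n : nat) (M : 'M[R]_n).

Definition adj : rel 'I_n := fun i j => (i != j) && (M i j != 0).

Definition sgn_edge (i j : 'I_n) : R := - (M i j / `|M i j|).

(* A walk y_1 = x, y_2, ..., y_m (m >= 2), given as x :: p with p nonempty. *)
Definition is_walk (x : 'I_n) (p : seq 'I_n) : bool :=
  (p != [::]) && path adj x p.

Variable f : 'I_n -> R.

Definition Omega : {set 'I_n} := [set x | f x != 0].

Definition S_walk (x : 'I_n) (p : seq 'I_n) : bool :=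
  (p != [::]) &&
  path (fun a b => adj a b && (0 < f a * sgn_edge a b * f b)) x p.

Definition W_walk (x : 'I_n) (p : seq 'I_n) : Prop :=
  is_walk x p /\
  let w := x :: p in
  forall i j : nat, (i < j < size w)%N ->
    f (nth x w i) != 0 -> f (nth x w j) != 0 ->
    (forall l : nat, (i < l < j)%N -> f (nth x w l) = 0) ->
    0 < f (nth x w i) *
        (\prod_(i <= l < j) sgn_edge (nth x w l) (nth x w l.+1)) *
        f (nth x w j).

Definition RS (x y : 'I_n) : bool :=
  `[< x = y \/ (exists p, S_walk x p /\ last x p = y)
            \/ (exists p, S_walk y p /\ last y p = x) >].

Definition RW (x y : 'I_n) : bool :=
  `[< x = y \/ (exists p, W_walk x p /\ last x p = y)
            \/ (exists p, W_walk y p /\ last y p = x) >].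

Definition nclasses_on (e : rel 'I_n) : nat :=
  #|[set [set y in Omega | e x y] | x in Omega]|.

Definition nS : nat := nclasses_on RS.
Definition nW : nat := nclasses_on RW.

End SignedGraph.

Definition ncomp (R : realType) (n : nat) (M : 'M[R]_n) : nat :=
  #|[set [set y | connect (adj M) x y] | x : 'I_n]|.

Definition connectedG (R : realType) (n : nat) (M : 'M[R]_n) : Prop :=
  forall x y : 'I_n, connect (adj M) x y.

Definition vfun (R : realType) (n : nat) (v : 'cV[R]_n) : 'I_n -> R :=
  fun i => v i 0.

Definition supp (R : realType) (n : nat) (v : 'cV[R]_n) : {set 'I_n} :=
  [set i | v i 0 != 0].

Definition eigenfun (R : realType) (n : nat) (M : 'M[R]_n) (lam : R)
  (v : 'cV[R]_n) : Prop := v != 0 /\ M *m v = lam *: v.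

Definition minimal_support (R : realType) (n : nat) (M : 'M[R]_n) (lam : R)
  (v : 'cV[R]_n) : Prop :=
  forall g : 'cV[R]_n, eigenfun M lam g -> supp g \subset supp v ->
    supp g = supp v.

(* Main.v *)
Require Import Defs.
From HB Require Import structures.
From mathcomp Require Import all_boot all_order all_algebra.
From mathcomp Require Import boolp reals.
Import Order.TTheory GRing.Theory Num.Theory.
Local Open Scope ring_scope.
From mathcomp Require Import zify ring lra.
Set Implicit Arguments. Unset Strict Implicit. Unset Printing Implicit Defensive.

Section Walks.
Variables (R : realType) (n : nat) (M : 'M[R]_n).
Hypothesis HM : M^T = M.
Variable f : 'I_n -> R.

Lemma Msym x y : M x y = M y x.
Proof. by rewrite -[in LHS]HM mxE. Qed.

Lemma adj_sym x y : adj M x y = adj M y x.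
Proof. by rewrite /adj eq_sym Msym. Qed.

Lemma sgn_sym x y : sgn_edge M x y = sgn_edge M y x.
Proof. by rewrite /sgn_edge Msym. Qed.

Lemma S_walk_rev x p : S_walk M f x p -> S_walk M f (last x p) (rev (belast x p)).
Proof.
rewrite /S_walk => /andP[pn pp]; apply/andP; split.
  by case: p pn {pp} => //= y p _; rewrite rev_cons; case: (rev _).
rewrite rev_path; apply: sub_path pp => a b /=.
rewrite adj_sym sgn_sym; suff -> : f b * sgn_edge M b a * f a = f a * sgn_edge M b a * f b by []. by ring.
Qed.

Lemma S_walk_cat x p q : S_walk M f x p -> S_walk M f (last x p) q -> S_walk M f x (p ++ q).
Proof.
rewrite /S_walk => /andP[pn pp] /andP[qn qp]; apply/andP; split.
  by case: p pn {pp qp}.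
by rewrite cat_path pp qp.
Qed.

Lemma S_walk_nz0 x p : S_walk M f x p -> f x != 0.
Proof.
case: p => [|y p] /andP[//] _ /= /andP[/andP[_ h] _].
by apply: contraTneq h => ->; rewrite !mul0r ltxx.
Qed.

Lemma S_walk_nz1 x p : S_walk M f x p -> f (last x p) != 0.
Proof.
move/S_walk_rev/S_walk_nz0; case: p => //= y p.
Qed.


Lemma mulrCC (a b c : R) : a * b * c = c * b * a.
Proof. by ring. Qed.

Lemma big_shift (F : nat -> R) a b :
  \prod_(a <= l < b) F l = \prod_(0 <= l < (b - a)%N) F (l + a)%N.
Proof. by rewrite -{1}[a]add0n big_addn. Qed.

Lemma rev_lastI (x : 'I_n) p : last x p :: rev (belast x p) = rev (x :: p).
Proof. by rewrite [in RHS]lastI rev_rcons. Qed.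

Lemma last_rev_belast (x : 'I_n) p : last (last x p) (rev (belast x p)) = x.
Proof.
have -> : last (last x p) (rev (belast x p)) = last x (last x p :: rev (belast x p)) by [].
by rewrite rev_lastI rev_cons last_rcons.
Qed.

Lemma nthrev (w : seq 'I_n) x y i : (i < size w)%N -> nth y (rev w) i = nth x w (size w - i.+1).
Proof. by move=> hi; rewrite nth_rev //; apply: set_nth_default; lia. Qed.

Lemma W_walk_rev x p : W_walk M f x p -> W_walk M f (last x p) (rev (belast x p)).
Proof.
case=> /andP[pn pp] H; split.
  apply/andP; split.
    by case: p pn {pp H} => //= y p _; rewrite rev_cons; case: (rev _).
  by rewrite rev_path; apply: sub_path pp => a b /=; rewrite adj_sym.
rewrite /= rev_lastI size_rev /=.
set y := last x p; set N := size p.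
have nr : forall l, (l <= N)%N -> nth y (rev (x :: p)) l = nth x (x :: p) (N - l).
  by move=> l hl; rewrite (nthrev x) /= ?subSS //; lia.
move=> i j /andP[ij jN] fi fj Z.
rewrite size_belast -/N in jN.
have iN : (i <= N)%N by lia.
have jN' : (j <= N)%N by lia.
rewrite nr // in fi; rewrite nr // in fj.
rewrite nr // nr //.
have E2 : forall l, nth y (rev (belast x p)) l = nth y (rev (x :: p)) l.+1 by move=> l; rewrite -rev_lastI.
have -> : \prod_(i <= l < j) sgn_edge M (nth y (rev (x :: p)) l) (nth y (rev (belast x p)) l)
   = \prod_(N - j <= l < N - i) sgn_edge M (nth x (x :: p) l) (nth x (x :: p) l.+1).
  rewrite big_shift [RHS]big_shift (_ : (N - i - (N - j) = j - i)%N); last by lia.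
  rewrite [RHS]big_nat_rev /=; apply: eq_big_nat => t /andP[_ ht].
  rewrite E2 !nr; try lia.
  rewrite sgn_sym /=.
  rewrite (_ : (0 + (j - i) - t.+1 + (N - j))%N = (N - (t + i).+1)%N); last by clear -ht jN'; lia.
  rewrite (_ : (N - (t + i) = (N - (t + i).+1).+1)%N) //; move: ht jN'; clear; lia.
rewrite mulrCC; apply: H => //; first by rewrite /= -/N; lia.
move=> l /andP[l1 l2].
have := Z (N - l)%N; rewrite nr ?leq_subr //.
rewrite (_ : (N - (N - l) = l)%N); last by lia.
by apply; lia.
Qed.

Lemma W_walk_cat x p q : W_walk M f x p -> f (last x p) != 0 ->
  W_walk M f (last x p) q -> W_walk M f x (p ++ q).
Proof.
case=> /andP[pn pp] H1 fy [/andP[qn qp] H2]; split.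
  apply/andP; split; first by case: p pn {pp H1 fy H2 qp}.
  by rewrite cat_path pp qp.
set y := last x p in fy H2 qp *; set m := size p.
have c1 : forall l, (l <= m)%N -> nth x (x :: p ++ q) l = nth x (x :: p) l.
  by move=> l hl; rewrite -cat_cons nth_cat /= ltnS hl.
have cy : nth x (x :: p) m = y.
  by rewrite -[m]/((size (x :: p)).-1) nth_last.
have c2 : forall l, (m <= l)%N -> (l < (size (p ++ q)).+1)%N ->
    nth x (x :: p ++ q) l = nth y (y :: q) (l - m).
  move=> l h1 h2; case: (ltngtP l m) => [|lt|eq]; first by lia.
    rewrite -cat_cons nth_cat /= ltnS leqNgt lt /=.
    rewrite (_ : (l - m = (l - m.+1).+1)%N) /=; last by lia.
    apply: set_nth_default; move: h2; rewrite size_cat; lia.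
  by rewrite eq c1 // subnn /= cy.
move=> /= i j /andP[ij jN] fi fj Z.
have Hs : size (p ++ q) = m + size q by rewrite size_cat.
case: (leqP j m) => jm.
  rewrite !c1 // in fi fj *; last by lia.
  have -> : \prod_(i <= l < j) sgn_edge M (nth x (x :: p ++ q) l) (nth x (x :: p ++ q) l.+1)
    = \prod_(i <= l < j) sgn_edge M (nth x (x :: p) l) (nth x (x :: p) l.+1).
    by apply: eq_big_nat => l /andP[_ hl]; rewrite !c1 //; lia.
  apply: H1 => //=; first by lia.
  by move=> l hl; rewrite -c1 ?Z //; lia.
case: (leqP m i) => im.
  rewrite !c2 // in fi fj *; try lia.
  have -> : \prod_(i <= l < j) sgn_edge M (nth x (x :: p ++ q) l) (nth x (x :: p ++ q) l.+1)
    = \prod_(i - m <= l < j - m) sgn_edge M (nth y (y :: q) l) (nth y (y :: q) l.+1).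
    rewrite big_shift [RHS]big_shift (_ : (j - m - (i - m) = j - i)%N); last by lia.
    apply: eq_big_nat => t /andP[_ ht]; rewrite !c2; try lia.
    congr (sgn_edge M (nth y (y :: q) _) (nth y (y :: q) _)); lia.
  apply: H2 => //=; first by lia.
  move=> l hl; have := Z (l + m); rewrite c2; try lia.
  by rewrite (_ : (l + m - m = l)%N); [apply; lia | lia].
have := Z m; rewrite c1 // cy => /(_ _)/eqP; rewrite (negbTE fy) => /(_ _)/esym.
by move=> h; have := h ltac:(lia).
Qed.

Lemma W_ends x p : path (adj M) x p -> p != [::] -> f x != 0 -> f (last x p) != 0 ->
  (forall l, (0 < l < size p)%N -> f (nth x (x :: p) l) = 0) ->
  0 < f x * (\prod_(0 <= l < size p) sgn_edge M (nth x (x :: p) l) (nth x (x :: p) l.+1))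
      * f (last x p) -> W_walk M f x p.
Proof.
move=> pp pn fx fl Zi pos; split; first by apply/andP.
move=> /= i j /andP[ij jN] fi fj Z.
have i0 : i = 0.
  case: i ij fi {Z} => // i ij; rewrite Zi ?eqxx //; lia.
have jn : j = size p.
  case: (ltngtP j (size p)) => // h; [rewrite Zi ?eqxx // in fj; lia | lia].
subst; rewrite /= -[size p]/((size (x :: p)).-1) nth_last /=.
by move: pos; rewrite /= .
Qed.

Lemma eprod_cons a b p :
  \prod_(0 <= l < size (b :: p)) sgn_edge M (nth a (a :: b :: p) l) (nth a (a :: b :: p) l.+1)
  = sgn_edge M a b * \prod_(0 <= l < size p) sgn_edge M (nth b (b :: p) l) (nth b (b :: p) l.+1).
Proof.
rewrite /= big_nat_recl //=; congr (_ * _); apply: eq_big_nat => l /andP[_ hl] /=.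
by congr sgn_edge; apply: set_nth_default => /=; lia.
Qed.

Definition Rel (Wk : 'I_n -> seq 'I_n -> Prop) x y :=
  x = y \/ (exists p, Wk x p /\ last x p = y) \/ (exists p, Wk y p /\ last y p = x).

Lemma Rel_sym Wk x y : Rel Wk x y -> Rel Wk y x.
Proof. by case=> [->|[h|h]]; [left|right;right|right;left]. Qed.

Section RelTrans.
Variable Wk : 'I_n -> seq 'I_n -> Prop.
Hypothesis Wrev : forall x p, Wk x p -> Wk (last x p) (rev (belast x p)).
Hypothesis Wcat : forall x p q, Wk x p -> f (last x p) != 0 -> Wk (last x p) q -> Wk x (p ++ q).

Lemma Rel_fw x y : Rel Wk x y -> x = y \/ exists p, Wk x p /\ last x p = y.
Proof.
case=> [->|[h|[p [hp <-]]]]; [by left|by right|right].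
by exists (rev (belast y p)); split; [apply: Wrev | apply: last_rev_belast].
Qed.

Lemma Rel_trans x y z : f y != 0 -> Rel Wk x y -> Rel Wk y z -> Rel Wk x z.
Proof.
move=> fy /Rel_fw [->//|[p [hp ep]]] /Rel_fw [<-|[q [hq eq]]].
  by right; left; exists p.
right; left; exists (p ++ q); split; last by rewrite last_cat ep.
by apply: Wcat; rewrite ?ep.
Qed.
End RelTrans.

Lemma RSE x y : RS M f x y = `[< Rel (S_walk M f) x y >].
Proof. by []. Qed.
Lemma RWE x y : RW M f x y = `[< Rel (W_walk M f) x y >].
Proof. by []. Qed.

End Walks.

Section Classes.
Variables (R : realType) (n : nat) (M : 'M[R]_n).
Hypothesis HM : M^T = M.
Variable f : 'I_n -> R.
Variable lam : R.
Hypothesis Hf : forall x, \sum_y M x y * f y = lam * f x.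

Definition quad (h : 'I_n -> R) := \sum_x \sum_y h x * M x y * h y.
Definition nrm (h : 'I_n -> R) := \sum_x h x ^+ 2.
Definition Tsum (al : 'I_n -> R) := \sum_x \sum_y (al x - al y) ^+ 2 * (f x * M x y * f y).

Lemma quad_id (al h : 'I_n -> R) : (forall x, h x = al x * f x) ->
  2 * (quad h - lam * nrm h) = - Tsum al.
Proof.
move=> hE.
have e1 : \sum_x \sum_y al x ^+ 2 * (f x * M x y * f y) = lam * nrm h.
  rewrite /nrm mulr_sumr; apply: eq_bigr => x _.
  transitivity (al x ^+ 2 * f x * \sum_y M x y * f y).
    by rewrite mulr_sumr; apply: eq_bigr => y _; ring.
  by rewrite Hf hE; ring.
have e2 : \sum_x \sum_y al y ^+ 2 * (f x * M x y * f y) = lam * nrm h.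
  rewrite exchange_big /nrm mulr_sumr; apply: eq_bigr => y _.
  transitivity (al y ^+ 2 * f y * \sum_x M y x * f x).
    by rewrite mulr_sumr; apply: eq_bigr => x _; rewrite (Msym HM x y); ring.
  by rewrite Hf hE; ring.
have e3 : \sum_x \sum_y al x * al y * (f x * M x y * f y) = quad h.
  by apply: eq_bigr => x _; apply: eq_bigr => y _; rewrite !hE; ring.
rewrite /Tsum.
have -> : \sum_x \sum_y (al x - al y) ^+ 2 * (f x * M x y * f y) =
   \sum_x \sum_y al x ^+ 2 * (f x * M x y * f y) + \sum_x \sum_y al y ^+ 2 * (f x * M x y * f y)
   - 2 * \sum_x \sum_y al x * al y * (f x * M x y * f y).
  rewrite -big_split /= mulr_sumr -sumrB; apply: eq_bigr => x _.
  rewrite -big_split /= mulr_sumr -sumrB; apply: eq_bigr => y _; ring.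
by rewrite e1 e2 e3; ring.
Qed.

Lemma sgn_pos x y : M x y != 0 ->
  (0 < f x * sgn_edge M x y * f y) = (f x * M x y * f y < 0).
Proof.
move=> Mn; have ap : 0 < `|M x y| by rewrite normr_gt0.
rewrite (_ : f x * sgn_edge M x y * f y = - (f x * M x y * f y) * `|M x y|^-1).
  by rewrite pmulr_lgt0 ?invr_gt0 // oppr_gt0.
by rewrite /sgn_edge; ring.
Qed.

Section Rel.
Variable Rr : rel 'I_n.
Hypothesis Rrefl : forall x, Rr x x.
Hypothesis Rsym : forall x y, Rr x y -> Rr y x.
Hypothesis Rtrans : forall x y z, f y != 0 -> Rr x y -> Rr y z -> Rr x z.
Hypothesis Redge : forall x y, adj M x y -> 0 < f x * sgn_edge M x y * f y -> Rr x y.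

Definition Om := Omega f.
Definition Cls := [set [set y in Om | Rr x y] | x in Om].
Definition qn := #|Cls|.

Lemma qnE : nclasses_on f Rr = qn.
Proof. by []. Qed.

Lemma Tsum_ge0_term (al : 'I_n -> R) x y :
  (forall x y, f x != 0 -> f y != 0 -> Rr x y -> al x = al y) ->
  0 <= (al x - al y) ^+ 2 * (f x * M x y * f y).
Proof.
move=> alR.
have [->|fx] := eqVneq (f x) 0; first by rewrite !mul0r mulr0.
have [->|fy] := eqVneq (f y) 0; first by rewrite !mulr0.
have [->|xy] := eqVneq x y; first by rewrite subrr expr0n /= mul0r.
have [->|Mxy] := eqVneq (M x y) 0; first by rewrite mulr0 mul0r mulr0.
have axy : adj M x y by rewrite /adj xy Mxy.
case Rxy: (Rr x y); first by rewrite (alR x y) // subrr expr0n /= mul0r.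
have : ~~ (0 < f x * sgn_edge M x y * f y) by apply: contraFN Rxy; apply: Redge.
rewrite sgn_pos // -leNgt => h; apply: mulr_ge0; first exact: sqr_ge0.
by rewrite leNgt; apply/negP => h'; move: h; rewrite leNgt h'.
Qed.

Lemma Tsum_ge0 (al : 'I_n -> R) :
  (forall x y, f x != 0 -> f y != 0 -> Rr x y -> al x = al y) -> 0 <= Tsum al.
Proof.
move=> alR; apply: sumr_ge0 => x _; apply: sumr_ge0 => y _; exact: Tsum_ge0_term.
Qed.

Lemma Tsum_eq0 (al : 'I_n -> R) :
  (forall x y, f x != 0 -> f y != 0 -> Rr x y -> al x = al y) -> Tsum al = 0 ->
  forall x y, f x != 0 -> f y != 0 -> adj M x y -> al x = al y.
Proof.
move=> alR T0 x y fx fy axy.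
have h1 := psumr_eq0P (fun x _ => sumr_ge0 _ (fun y _ => Tsum_ge0_term x y alR)) T0 (i:=x) isT.
have := psumr_eq0P (fun y _ => Tsum_ge0_term x y alR) h1 (i:=y) isT.
move/eqP; rewrite mulf_eq0 => /orP[|].
  by rewrite sqrf_eq0 subr_eq0 => /eqP.
move: axy => /andP[_ Mxy]; rewrite !mulf_eq0 (negbTE fx) (negbTE fy) (negbTE Mxy).
by [].
Qed.

Lemma class_eq x z : f x != 0 -> f z != 0 -> Rr x z ->
  [set y in Om | Rr x y] = [set y in Om | Rr z y].
Proof.
move=> fx fz Rxz; apply/setP => y; rewrite !inE.
case: (f y != 0) => //=; apply/idP/idP => h.
  exact: Rtrans (Rsym Rxz) h.
exact: Rtrans Rxz h.
Qed.

Lemma cls_of (i : 'I_qn) : exists2 x, f x != 0 & enum_val i = [set y in Om | Rr x y].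
Proof.
have := enum_valP i; rewrite /qn => /imsetP[x]; rewrite inE => fx ->.
by exists x.
Qed.

Definition Umx : 'M[R]_(qn, n) :=
  \matrix_(i, x) (if x \in (enum_val i : {set 'I_n}) then f x else 0).

Definition alpha (a : 'rV[R]_qn) (x : 'I_n) : R :=
  \sum_i a 0 i * (x \in (enum_val i : {set 'I_n}))%:R.

Lemma UmxE (a : 'rV[R]_qn) x : (a *m Umx) 0 x = alpha a x * f x.
Proof.
rewrite !mxE /alpha mulr_suml; apply: eq_bigr => i _; rewrite mxE.
by case: (x \in _); rewrite ?mulr1 ?mulr0 ?mul0r.
Qed.

Lemma alphaR (a : 'rV[R]_qn) x y : f x != 0 -> f y != 0 -> Rr x y -> alpha a x = alpha a y.
Proof.
move=> fx fy Rxy; apply: eq_bigr => i _; congr (_ * _%:R); congr (nat_of_bool _).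
have [z fz ->] := cls_of i; rewrite !inE fx fy /=.
case: (boolP (Rr z x)) => h; first by rewrite (Rtrans fx h Rxy).
by apply/esym/negbTE; apply: contra h => h'; exact: Rtrans fy h' (Rsym Rxy).
Qed.

Lemma row_free_of m p (A : 'M[R]_(m, p)) :
  (forall a : 'rV_m, a *m A = 0 -> a = 0) -> row_free A.
Proof.
move=> H; rewrite -kermx_eq0; apply/eqP/row_matrixP => i; rewrite row0; apply: H.
by rewrite -row_mul mulmx_ker row0.
Qed.

Lemma rank_Umx : \rank Umx = qn.
Proof.
apply/eqP; apply: row_free_of => a aU; apply/rowP => i; rewrite mxE.
have [x fx ex] := cls_of i.
have := congr1 (fun h : 'rV_n => h 0 x) aU; rewrite !mxE (bigD1 i) //= big1.
  rewrite mxE ex inE [_ \in Om]inE fx /= Rrefl addr0 => /eqP; rewrite mulf_eq0 (negbTE fx) orbF.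
  by move/eqP.
move=> j ji; rewrite mxE; case: ifP; last by rewrite mulr0.
have [z fz ez] := cls_of j; rewrite ez inE => /andP[_ Rzx].
have : enum_val j = enum_val i :> {set 'I_n} by rewrite ez ex (class_eq fz fx Rzx).
by move/enum_val_inj => eji; rewrite eji eqxx in ji.
Qed.

End Rel.
End Classes.

Section Eig.
Variables (R : realType) (n : nat) (M : 'M[R]_n).
Hypothesis HM : M^T = M.
Variables (P : 'M[R]_n) (D : 'rV[R]_n).
Hypothesis Pu : P \in unitmx.
Hypothesis PM : P *m M = diag_mx D *m P.
Variable lam : R.

Lemma PMe i y : \sum_x P i x * M x y = D 0 i * P i y.
Proof.
have := congr1 (fun A : 'M_n => A i y) PM; rewrite mul_diag_mx !mxE => <-.
by apply: eq_bigr.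
Qed.

Definition Gm i j := \sum_y P i y * P j y.

Lemma Gorth i j : (D 0 i - D 0 j) * Gm i j = 0.
Proof.
have e1 : \sum_y (\sum_x P i x * M x y) * P j y = D 0 i * Gm i j.
  rewrite /Gm mulr_sumr; apply: eq_bigr => y _; rewrite PMe; ring.
have e2 : \sum_y (\sum_x P i x * M x y) * P j y = D 0 j * Gm i j.
  under eq_bigr do rewrite mulr_suml.
  rewrite exchange_big /Gm mulr_sumr; apply: eq_bigr => x _ /=.
  transitivity (P i x * \sum_y P j y * M y x).
    by rewrite mulr_sumr; apply: eq_bigr => y _; rewrite (Msym HM x y); ring.
  by rewrite PMe; ring.
by rewrite mulrBl -e1 -e2 subrr.
Qed.

Definition vP (b : 'rV[R]_n) y := \sum_i b 0 i * P i y.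

Lemma vPE b y : (b *m P) 0 y = vP b y.
Proof. by rewrite mxE. Qed.

Lemma bil (a b : 'rV[R]_n) :
  \sum_y vP a y * vP b y = \sum_i \sum_j a 0 i * b 0 j * Gm i j.
Proof.
rewrite /vP; under eq_bigr do rewrite mulr_suml.
rewrite exchange_big; apply: eq_bigr => i _ /=.
under eq_bigr do rewrite mulr_sumr.
rewrite exchange_big; apply: eq_bigr => j _ /=.
rewrite /Gm mulr_sumr; apply: eq_bigr => y _; ring.
Qed.

Lemma quad_vP (b : 'rV[R]_n) :
  quad M (vP b) - lam * nrm (vP b) =
  \sum_i \sum_j (b 0 i * D 0 i - lam * b 0 i) * b 0 j * Gm i j.
Proof.
have q1 : quad M (vP b) = \sum_y vP (\row_i (b 0 i * D 0 i)) y * vP b y.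
  rewrite /quad exchange_big; apply: eq_bigr => y _ /=.
  rewrite -mulr_suml; congr (_ * _).
  rewrite /vP; under eq_bigr do rewrite mulr_suml.
  rewrite exchange_big; apply: eq_bigr => i _ /=.
  rewrite mxE -mulrA -PMe mulr_sumr; apply: eq_bigr => x _; ring.
have q2 : nrm (vP b) = \sum_y vP b y * vP b y.
  by apply: eq_bigr => y _; rewrite expr2.
rewrite q1 q2 !bil mulr_sumr -sumrB; apply: eq_bigr => i _.
rewrite mulr_sumr -sumrB; apply: eq_bigr => j _; rewrite !mxE; ring.
Qed.

Lemma E_quad (b : 'rV[R]_n) : (forall i, D 0 i < lam -> b 0 i = 0) ->
  0 <= quad M (vP b) - lam * nrm (vP b) /\
  (quad M (vP b) - lam * nrm (vP b) = 0 -> forall i, D 0 i != lam -> b 0 i = 0).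
Proof.
move=> bs.
pose g := \row_i (b 0 i * Num.sqrt (D 0 i - lam)).
have qE : quad M (vP b) - lam * nrm (vP b) = \sum_y vP g y ^+ 2.
  rewrite quad_vP; under [RHS]eq_bigr do rewrite expr2.
  rewrite bil; apply: eq_bigr => i _; apply: eq_bigr => j _; rewrite !mxE.
  have [G0|Gn] := eqVneq (Gm i j) 0; first by rewrite G0 !mulr0.
  have Dij : D 0 i = D 0 j.
    by apply/eqP; rewrite -subr_eq0; have /eqP := Gorth i j; rewrite mulf_eq0 (negbTE Gn) orbF.
  have [bi0|bin] := eqVneq (b 0 i) 0; first by rewrite bi0; ring.
  have [bj0|bjn] := eqVneq (b 0 j) 0; first by rewrite bj0; ring.
  have Dl : 0 <= D 0 i - lam.
    by rewrite subr_ge0 leNgt; apply: contra bin => /bs ->.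
  rewrite -Dij; have := sqr_sqrtr Dl; rewrite expr2 => sq.
  transitivity (b 0 i * b 0 j * Gm i j * (Num.sqrt (D 0 i - lam) * Num.sqrt (D 0 i - lam))).
    by rewrite sq; ring.
  by ring.
rewrite qE; split; first by apply: sumr_ge0 => y _; apply: sqr_ge0.
move=> h0.
have g0 : g = 0.
  have : g *m P = 0.
    apply/rowP => y; rewrite vPE mxE.
    have := psumr_eq0P (fun y _ => sqr_ge0 (vP g y)) h0 (i:=y) isT.
    by move/eqP; rewrite sqrf_eq0 => /eqP.
  by move/eqP; rewrite mulmx_free_eq0 ?row_free_unit // => /eqP.
move=> i Dn; have := congr1 (fun v : 'rV_n => v 0 i) g0; rewrite !mxE => /eqP.
rewrite mulf_eq0 => /orP[/eqP //|]; rewrite sqrtr_eq0 subr_le0 => Dle.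
have [bi0|bin] := eqVneq (b 0 i) 0 => //.
have : lam <= D 0 i by rewrite leNgt; apply: contra bin => /bs ->.
by move=> h; move: Dn; rewrite eq_le Dle h.
Qed.

Lemma vP_eig (b : 'rV[R]_n) : (forall i, D 0 i != lam -> b 0 i = 0) ->
  forall y, \sum_x vP b x * M x y = lam * vP b y.
Proof.
move=> bs y; rewrite /vP; under eq_bigr do rewrite mulr_suml.
rewrite exchange_big mulr_sumr; apply: eq_bigr => i _ /=.
transitivity (b 0 i * (D 0 i * P i y)).
  by rewrite -PMe mulr_sumr; apply: eq_bigr => x _; ring.
have [->|bn] := eqVneq (b 0 i) 0; first by rewrite !mul0r mulr0.
have /eqP -> : D 0 i == lam by apply: contraNT bn => /bs ->.
by ring.
Qed.

Section Esub.
Variable S : {set 'I_n}.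
Definition ev : 'I_#|S| -> 'I_n := enum_val.
Definition Esub : 'M[R]_(#|S|, n) := rowsub ev P.

Lemma Esub_coef (h : 'rV[R]_n) : (h <= Esub)%MS ->
  exists b : 'rV[R]_n, h = b *m P /\ forall i, i \notin S -> b 0 i = 0.
Proof.
case/submxP => a ->; exists (a *m rowsub ev 1%:M); split.
  by rewrite /Esub rowsubE mulmxA.
move=> i iS; rewrite mxE big1 // => t _; rewrite !mxE.
have : ev t != i by apply: contraNneq iS => <-; apply: enum_valP.
by move/negbTE => ->; rewrite mulr0.
Qed.

Lemma Esub_of (b : 'rV[R]_n) : (forall i, i \notin S -> b 0 i = 0) ->
  (b *m P <= Esub)%MS.
Proof.
move=> bs; have -> : b = \row_t (b 0 (ev t)) *m rowsub ev 1%:M.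
  apply/rowP => i; rewrite mxE.
  case: (boolP (i \in S)) => iS.
    rewrite (bigD1 (enum_rank_in iS i)) //= big1.
      by rewrite !mxE /ev enum_rankK_in // eqxx mulr1 addr0.
    move=> t tn; rewrite !mxE; case: eqP; rewrite ?mulr0 // => ei.
    by case/eqP: tn; apply: enum_val_inj; rewrite -/(ev t) ei /ev enum_rankK_in.
  rewrite bs // big1 // => t _; rewrite !mxE.
  have : ev t != i by apply: contraNneq iS => <-; apply: enum_valP.
  by move/negbTE => ->; rewrite mulr0.
by rewrite -mulmxA -rowsubE submxMl.
Qed.

Lemma rank_Esub : \rank Esub = #|S|.
Proof.
apply/eqP; apply: row_free_of => a.
rewrite /Esub rowsubE mulmxA => /eqP; rewrite mulmx_free_eq0 ?row_free_unit // => /eqP a0.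
apply/rowP => t; have := congr1 (fun v : 'rV_n => v 0 (ev t)) a0; rewrite !mxE.
rewrite (bigD1 t) //= big1 ?mxE ?eqxx ?mulr1 ?addr0 // => t' tn; rewrite !mxE.
case: eqP; rewrite ?mulr0 // => e; case/eqP: tn; exact: enum_val_inj e.
Qed.
End Esub.

End Eig.

Section Rels.
Variables (R : realType) (n : nat) (M : 'M[R]_n).
Hypothesis HM : M^T = M.
Variable f : 'I_n -> R.

Lemma RS_refl x : RS M f x x.
Proof. by apply/asboolP; left. Qed.
Lemma RW_refl x : RW M f x x.
Proof. by apply/asboolP; left. Qed.

Lemma RS_sym x y : RS M f x y -> RS M f y x.
Proof. by move/asboolP/(Rel_sym (Wk := S_walk M f)) => h; apply/asboolP. Qed.
Lemma RW_sym x y : RW M f x y -> RW M f y x.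
Proof. by move/asboolP/(Rel_sym (Wk := W_walk M f)) => h; apply/asboolP. Qed.

Lemma RS_trans x y z : f y != 0 -> RS M f x y -> RS M f y z -> RS M f x z.
Proof.
move=> fy /asboolP h1 /asboolP h2; apply/asboolP.
apply: (Rel_trans (Wk := S_walk M f) (S_walk_rev HM (f:=f))) fy h1 h2.
by move=> a p q h _ h'; apply: S_walk_cat.
Qed.

Lemma RW_trans x y z : f y != 0 -> RW M f x y -> RW M f y z -> RW M f x z.
Proof.
move=> fy /asboolP h1 /asboolP h2; apply/asboolP.
apply: (Rel_trans (Wk := W_walk M f) (W_walk_rev HM (f:=f))) fy h1 h2.
by move=> a p q h h0 h'; apply: W_walk_cat.
Qed.

Lemma RS_edge x y : adj M x y -> 0 < f x * sgn_edge M x y * f y -> RS M f x y.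
Proof.
move=> axy pos; apply/asboolP; right; left; exists [:: y]; split => //.
by rewrite /S_walk /= axy pos.
Qed.

Lemma RW_walk x p : W_walk M f x p -> RW M f x (last x p).
Proof. by move=> h; apply/asboolP; right; left; exists p. Qed.

Lemma RW_edge x y : adj M x y -> 0 < f x * sgn_edge M x y * f y -> RW M f x y.
Proof.
move=> axy pos; have := RW_walk (p := [:: y]); apply.
have fx : f x != 0 by apply: contraTneq pos => ->; rewrite !mul0r ltxx.
have fy : f y != 0 by apply: contraTneq pos => ->; rewrite !mulr0 ltxx.
apply: W_ends => //=; first by rewrite axy.
  by move=> l; lia.
by rewrite big_nat1.
Qed.

End Rels.

Lemma sgn3 (R : realDomainType) (a b c : R) : a*b < 0 -> a*c < 0 -> 0 < b*c.
Proof. move=> h1 h2; nra. Qed.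
Lemma sgn4 (R : realDomainType) (a b c : R) : a*b < 0 -> 0 < a*c -> b*c < 0.
Proof. move=> h1 h2; nra. Qed.

Section Zero.
Variables (R : realType) (n : nat) (M : 'M[R]_n).
Hypothesis HM : M^T = M.
Variable f : 'I_n -> R.
Variable lam : R.
Hypothesis Hf : forall x, \sum_y M x y * f y = lam * f x.
Variable al : 'I_n -> R.
Hypothesis alR : forall x y, f x != 0 -> f y != 0 -> RW M f x y -> al x = al y.
Hypothesis Hh : forall z, \sum_y M z y * (al y * f y) = lam * (al z * f z).
Hypothesis aladj : forall x y, f x != 0 -> f y != 0 -> adj M x y -> al x = al y.

Definition ind (b : bool) : R := if b then 1 else 0.

Lemma adjM a b : adj M a b -> M a b != 0.
Proof. by case/andP. Qed.

Lemma sgn_f u z : f u * sgn_edge M u z = - (M z u * f u) / `|M z u|.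
Proof. by rewrite /sgn_edge (Msym HM u z); ring. Qed.

Lemma sgn_neq0 a b : M a b != 0 -> sgn_edge M a b != 0.
Proof.
by move=> h; rewrite /sgn_edge oppr_eq0 mulf_neq0 // invr_neq0 // normr_eq0.
Qed.

Lemma walk3 u z y : f u != 0 -> f z = 0 -> f y != 0 -> adj M u z -> adj M z y ->
  0 < (M z u * f u) * (M z y * f y) -> RW M f u y.
Proof.
move=> fu fz fy auz azy pos.
apply: (RW_walk (p := [:: z; y])); apply: W_ends => //=.
- by rewrite auz azy.
- by move=> l hl; rewrite (_ : l = 1)%N //; lia.
- rewrite big_nat_recl // big_nat1 /=.
  have Mzu : M z u != 0 by rewrite (Msym HM); exact: adjM.
  have Mzy : M z y != 0 by exact: adjM.
  have -> : f u * (sgn_edge M u z * sgn_edge M z y) * f y =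
     ((M z u * f u) * (M z y * f y)) * (`|M z u|^-1 * `|M z y|^-1).
    by rewrite /sgn_edge (Msym HM u z); ring.
  by rewrite mulr_gt0 // mulr_gt0 // invr_gt0 normr_gt0.
Qed.

Lemma adj_of z y : f z = 0 -> f y != 0 -> M z y != 0 -> adj M z y.
Proof.
move=> fz fy Mzy; rewrite /adj Mzy andbT; apply: contraNneq fy => <-.
by rewrite fz.
Qed.

Lemma Z1 z u u' : f z = 0 -> adj M z u -> adj M z u' -> f u != 0 -> f u' != 0 ->
  al u = al u'.
Proof.
move=> fz azu azu' fu fu'.
pose s y := M z y * f y.
have E1 : \sum_y s y = 0 by rewrite Hf fz mulr0.
have E2 : \sum_y s y * al y = 0.
  transitivity (\sum_y M z y * (al y * f y)).
    by apply: eq_bigr => y _; rewrite /s; ring.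
  by rewrite Hh fz !mulr0.
have E3 : \sum_y s y * (al y - al u) = 0.
  transitivity (\sum_y s y * al y - al u * \sum_y s y).
    by rewrite mulr_sumr -sumrB; apply: eq_bigr => y _; ring.
  by rewrite E1 E2 mulr0 subr0.
have su : s u != 0 by rewrite mulf_neq0 // adjM.
have su' : s u' != 0 by rewrite mulf_neq0 // adjM.
have Hsame : forall y, f y != 0 -> adj M z y -> 0 < s u * s y -> al y = al u.
  move=> y fy azy pos; apply/esym/alR => //; apply: walk3 fu fz fy _ azy pos.
  by rewrite (adj_sym HM).
apply/eqP; apply: contraT => ne.
have neg : s u * s u' < 0.
  rewrite ltNge le_eqVlt eq_sym mulf_eq0 (negbTE su) (negbTE su') /=.
  by apply/negP => /Hsame -/(_ fu' azu') e; rewrite e eqxx in ne.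
have key : forall y, s y * (al y - al u) = ind (s u * s y < 0) * s y * (al u' - al u).
  move=> y; have [sy0|sy] := eqVneq (s y) 0; first by rewrite sy0 !(mulr0, mul0r).
  have fy : f y != 0 by apply: contraNneq sy; rewrite /s => ->; rewrite mulr0 eqxx.
  have Mzy : M z y != 0 by apply: contraNneq sy; rewrite /s => ->; rewrite mul0r eqxx.
  have azy := adj_of fz fy Mzy.
  rewrite /ind; case: (ltrgtP (s u * s y) 0) => h /=.
  - rewrite mul1r; congr (_ * (_ - _)); apply: alR => //.
    apply: walk3 fy fz fu' _ azu' (sgn3 h neg); by rewrite (adj_sym HM).
  - by rewrite mul0r (Hsame y) // subrr !(mulr0, mul0r).
  - by move/eqP: h; rewrite mulf_eq0 (negbTE su) (negbTE sy).
have E4 : \sum_y ind (s u * s y < 0) * s y = 0.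
  move: E3; under eq_bigr do rewrite key.
  rewrite -mulr_suml => /eqP; rewrite mulf_eq0 subr_eq0 [al u' == _]eq_sym (negbTE ne) orbF.
  by move/eqP.
have E5 : \sum_y ind (s u * s y < 0) * s y * s u' = 0 by rewrite -mulr_suml E4 mul0r.
have T0 : forall y, 0 <= ind (s u * s y < 0) * s y * s u'.
  move=> y; rewrite /ind; case: ltP => h /=; last by rewrite !mul0r.
  by rewrite mul1r ltW // (sgn3 h neg).
have := psumr_eq0P (fun y _ => T0 y) E5 (i:=u') isT.
by rewrite /ind neg mul1r => /eqP; rewrite mulf_eq0 orbb (negbTE su').
Qed.

Lemma Z2 u zs w : f u != 0 -> zs != [::] -> all (fun z => f z == 0) zs -> f w != 0 ->
  path (adj M) u (zs ++ [:: w]) -> al u = al w.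
Proof.
case: zs => [//|z1 zs'] fu _ /= /andP[/eqP fz1 zz] fw /andP[auz pz].
set q := zs' ++ [:: w].
pose s y := M z1 y * f y.
pose K := (\prod_(0 <= l < size q) sgn_edge M (nth z1 (z1 :: q) l) (nth z1 (z1 :: q) l.+1)) * f w.
have Kn : K != 0.
  rewrite mulf_neq0 // prodf_seq_neq0; apply/allP => l; rewrite mem_index_iota => hl /=.
  apply: sgn_neq0; apply: adjM; move/(pathP z1): pz => /(_ l hl).
  by rewrite /=.
have E1 : \sum_y s y = 0 by rewrite Hf fz1 mulr0.
have su : s u != 0 by rewrite mulf_neq0 // (Msym HM) adjM.
have [u'' [fu'' azu'' neg alu]] : exists u'', [/\ f u'' != 0, adj M z1 u'', s u'' * K < 0 & al u'' = al u].
  case: (ltrgtP (s u * K) 0) => h.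
  - by exists u; split => //; rewrite (adj_sym HM).
  - case: (pickP (fun y => s u * s y < 0)) => [y hy|none].
      have sy : s y != 0 by apply: contraTneq hy => ->; rewrite mulr0 ltxx.
      have fy : f y != 0 by apply: contraNneq sy; rewrite /s => ->; rewrite mulr0 eqxx.
      have Mzy : M z1 y != 0 by apply: contraNneq sy; rewrite /s => ->; rewrite mul0r eqxx.
      exists y; split => //; first exact: adj_of.
        exact: sgn4 hy h.
      have azy : adj M z1 y := adj_of fz1 fy Mzy.
      have azu : adj M z1 u by rewrite (adj_sym HM).
      exact: Z1 fz1 azy azu fy fu.
    have T0 : forall y, 0 <= s u * s y by move=> y; rewrite leNgt none.
    have : \sum_y s u * s y = 0 by rewrite -mulr_sumr E1 mulr0.
    move/(psumr_eq0P (fun y _ => T0 y))/(_ u isT)/eqP.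
    by rewrite mulf_eq0 orbb (negbTE su).
  - by move/eqP: h; rewrite mulf_eq0 (negbTE su) (negbTE Kn).
rewrite -alu; apply: alR => //.
have -> : w = last u'' (z1 :: q) by rewrite /q /= last_cat.
apply: RW_walk; apply: W_ends => //.
- by rewrite /= (adj_sym HM) azu''.
- by rewrite /q /= last_cat.
- move=> l /andP[l0 hl]; rewrite /q -cat_cons -cat_cons nth_cat /=.
  rewrite /q /= size_cat /= in hl; rewrite (_ : (l < (size zs').+2)%N); last by move: hl; rewrite addn1.
  apply/eqP; case: l l0 hl => // l _ hl /=.
  have hl' : (l < size (z1 :: zs'))%N by move: hl; rewrite addn1 ltnS.
  rewrite (set_nth_default z1 u'' hl'); move/(mem_nth z1): hl'.
  by rewrite inE => /orP[/eqP ->|m]; [rewrite fz1 | exact: (allP zz)].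
- rewrite eprod_cons.
  have -> : f u'' * (sgn_edge M u'' z1 * \prod_(0 <= l < size q) sgn_edge M (nth z1 (z1 :: q) l) (nth z1 (z1 :: q) l.+1)) * f (last z1 q) = (f u'' * sgn_edge M u'' z1) * K.
    by rewrite /K /q last_cat /=; ring.
  rewrite sgn_f; have Ma : 0 < `|M z1 u''| by rewrite normr_gt0 adjM.
  have -> : - (M z1 u'' * f u'') / `|M z1 u''| * K = - (s u'' * K) / `|M z1 u''|.
    by rewrite /s; ring.
  by rewrite divr_gt0 // oppr_gt0.
Qed.

Lemma run p : forall u zs, f u != 0 -> all (fun z => f z == 0) zs ->
  path (adj M) u (zs ++ p) -> f (last u (zs ++ p)) != 0 -> al u = al (last u (zs ++ p)).
Proof.
elim: p => [|v p IH] u zs fu zz pp fl.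
  rewrite cats0 in pp fl *; case: zs zz fl {pp} => [//|z zs'] zz fl.
  have := allP zz _ (mem_last z zs'); rewrite -/(last u (z :: zs')).
  by rewrite (negbTE fl).
have [fv|fv] := eqVneq (f v) 0.
  have := IH u (rcons zs v) fu; rewrite cat_rcons; apply => //.
  by rewrite all_rcons fv eqxx.
rewrite last_cat /=.
have -> : al u = al v.
  case: zs zz pp {fl} => [|z zs'] zz pp.
    by move: pp => /= /andP[auv _]; apply: aladj.
  apply: Z2 fu _ zz fv _ => //.
  move: pp; rewrite !cat_path => /andP[-> /=]; by case/andP => ->.
apply: (IH v [::]) => //.
  by move: pp; rewrite cat_path => /andP[_ /=]; case/andP.
by move: fl; rewrite last_cat.
Qed.

Lemma conn_al x y : f x != 0 -> f y != 0 -> connect (adj M) x y -> al x = al y.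
Proof.
move=> fx fy /connectP[p pp ey]; rewrite ey in fy *.
exact: (run (zs := [::]) fx isT pp fy).
Qed.

End Zero.

Section Spec.
Variables (R : realType) (n' : nat).
Local Notation n := n'.+1.
Variable M : 'M[R]_n.
Hypothesis HM : M^T = M.
Variable s : seq R.
Hypothesis Hchar : char_poly M = \prod_(x <- s) ('X - x%:P).

Lemma horner_tr (p : {poly R}) : (horner_mx M p)^T = horner_mx M p.
Proof.
elim/poly_ind: p => [|p c IH]; first by rewrite rmorph0 trmx0.
rewrite rmorphD rmorphM /= horner_mx_X horner_mx_C raddfD /= tr_scalar_mx.
rewrite -mulmxE trmx_mul IH HM; congr (_ + _).
by have := @comm_horner_mx _ _ M M p erefl.
Qed.

Lemma tr_exp (S : 'M[R]_n) k : S^T = S -> (S ^+ k)^T = S ^+ k.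
Proof.
move=> HS; elim: k => [|k IH]; first by rewrite expr0 trmx1.
by rewrite exprS -mulmxE trmx_mul IH HS mulmxE -exprSr -exprS.
Qed.

Lemma sym_sq0 (T : 'M[R]_n) : T^T = T -> T * T = 0 -> T = 0.
Proof.
move=> HT TT; apply/matrixP => i j; rewrite mxE.
have := congr1 (fun A : 'M_n => A i i) TT; rewrite -mulmxE !mxE => h.
have h2 : forall l, 0 <= T i l * T l i.
  by move=> l; rewrite -{2}HT mxE -expr2 sqr_ge0.
have := psumr_eq0P (fun l _ => h2 l) h (i:=j) isT.
by rewrite -{2}HT mxE => /eqP; rewrite mulf_eq0 orbb => /eqP.
Qed.

Lemma sym_nil (S : 'M[R]_n) : S^T = S -> forall k, S ^+ k.+1 = 0 -> S = 0.
Proof.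
move=> HS; elim=> [|k IH]; first by rewrite expr1.
move=> h; apply: IH; apply: sym_sq0; first exact: tr_exp.
by rewrite -exprD (_ : (k.+1 + k.+1 = k.+2 + k)%N) ?exprD ?h ?mul0r //; lia.
Qed.

Definition psq := \prod_(a <- undup s) ('X - a%:P).

Lemma dvd_char_psq t : all (mem s) t -> \prod_(x <- t) ('X - x%:P) %| psq ^+ size t.
Proof.
elim: t => [|x t IH] /=; first by rewrite big_nil dvd1p.
case/andP=> xs ts; rewrite big_cons exprS; apply: dvdp_mul; last exact: IH.
by rewrite dvdp_XsubCl root_prod_XsubC mem_undup.
Qed.

Lemma psq0 : horner_mx M psq = 0.
Proof.
have ss : size s = n.
  by have := size_char_poly M; rewrite Hchar size_prod_XsubC => -[].
have dv : char_poly M %| psq ^+ size s.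
  by rewrite Hchar; apply: dvd_char_psq; apply/allP => x.
have [r hr] := dvdpP _ _ dv.
have : horner_mx M psq ^+ n = 0.
  by rewrite -rmorphXn -ss hr rmorphM /= Cayley_Hamilton mulr0.
apply: sym_nil; exact: horner_tr.
Qed.

Lemma char_poly_simil (P A : 'M[R]_n) : P \in unitmx ->
  char_poly (invmx P *m A *m P) = char_poly A.
Proof.
move=> Pu; rewrite /char_poly /char_poly_mx.
set Pi := map_mx polyC (invmx P); set Pp := map_mx polyC P.
have PiP : Pi *m Pp = 1%:M by rewrite -map_mxM mulVmx // map_mx1.
have eX : 'X%:M = Pi *m 'X%:M *m Pp :> 'M[{poly R}]_n.
  by rewrite scalar_mxC -mulmxA PiP mulmx1.
rewrite {1}eX !map_mxM -/Pi -/Pp -mulmxBl -mulmxBr !det_mulmx mulrAC -det_mulmx.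
by rewrite PiP det1 mul1r.
Qed.

Lemma exists_diag : exists P : 'M[R]_n, exists D : 'rV[R]_n,
  [/\ P \in unitmx, P *m M = diag_mx D *m P &
      perm_eq s [seq D 0 i | i <- index_enum 'I_n]].
Proof.
have : exists2 P : 'M_n, P \in unitmx & similar_diag P M.
  apply/diagonalizableP; exists (undup s); first exact: undup_uniq.
  by apply: mxminpoly_min; exact: psq0.
case=> P Pu /(similar_diagLR Pu)[D MD].
rewrite conjVmx // in MD.
exists P, D; split => //.
  by rewrite [in LHS]MD !mulmxA mulmxV // mul1mx.
apply: prod_XsubC_eq; rewrite -Hchar MD char_poly_simil //.
rewrite char_poly_trig ?diag_mx_is_trig // big_map.
by apply: eq_bigr => i _; rewrite mxE eqxx.
Qed.

End Spec.

Lemma quad_ext (R : realType) n (M : 'M[R]_n) (g1 g2 : 'I_n -> R) : g1 =1 g2 -> quad M g1 = quad M g2.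
Proof. by move=> e; apply: eq_bigr => x _; apply: eq_bigr => y _; rewrite !e. Qed.
Lemma nrm_ext (R : realType) n (g1 g2 : 'I_n -> R) : g1 =1 g2 -> nrm g1 = nrm g2.
Proof. by move=> e; apply: eq_bigr => x _; rewrite e. Qed.

Section Core.
Variables (R : realType) (n : nat) (M : 'M[R]_n).
Hypothesis HM : M^T = M.
Variable f : 'I_n -> R.
Variable lam : R.
Hypothesis Hf : forall x, \sum_y M x y * f y = lam * f x.
Variables (P : 'M[R]_n) (D : 'rV[R]_n).
Hypothesis Pu : P \in unitmx.
Hypothesis PM : P *m M = diag_mx D *m P.
Variable Rr : rel 'I_n.
Hypothesis Rrefl : forall x, Rr x x.
Hypothesis Rsym : forall x y, Rr x y -> Rr y x.
Hypothesis Rtrans : forall x y z, f y != 0 -> Rr x y -> Rr y z -> Rr x z.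
Hypothesis Redge : forall x y, adj M x y -> 0 < f x * sgn_edge M x y * f y -> Rr x y.

Definition Ige := [set i | lam <= D 0 i].
Definition Ieq := [set i | D 0 i == lam].
Definition Cap := (Umx f Rr :&: Esub P Ige)%MS.

Lemma rank_Cap : (qn f Rr + #|Ige| <= \rank Cap + n)%N.
Proof.
have := mxrank_sum_cap (Umx f Rr) (Esub P Ige).
rewrite rank_Umx // rank_Esub // => <-.
by rewrite addnC /Cap leq_add2l rank_leq_col.
Qed.

Lemma Cap_row (h : 'rV[R]_n) : (h <= Cap)%MS -> exists al : 'I_n -> R,
  [/\ forall x, h 0 x = al x * f x,
      forall x y, f x != 0 -> f y != 0 -> Rr x y -> al x = al y,
      forall x y, f x != 0 -> f y != 0 -> adj M x y -> al x = al y &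
      exists b : 'rV[R]_n, h = b *m P /\ forall i, D 0 i != lam -> b 0 i = 0].
Proof.
rewrite sub_capmx => /andP[/submxP[a ha] /Esub_coef[b [hb bs]]].
exists (alpha a).
have hE : forall x, h 0 x = alpha a x * f x by move=> x; rewrite ha UmxE.
have alR : forall x y, f x != 0 -> f y != 0 -> Rr x y -> alpha a x = alpha a y.
  by move=> x y; apply: alphaR.
have bs' : forall i, D 0 i < lam -> b 0 i = 0.
  by move=> i Di; apply: bs; rewrite inE -ltNge.
have [Q0 Qeq] := E_quad HM Pu PM bs'.
have ev : vP P b =1 (fun x => h 0 x) by move=> x; rewrite hb vPE.
rewrite (quad_ext M ev) (nrm_ext ev) in Q0 Qeq.
have qi := quad_id HM Hf hE.
have T0 := Tsum_ge0 Redge alR.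
have Qz : quad M (fun x => h 0 x) - lam * nrm (fun x => h 0 x) = 0.
  apply/eqP; rewrite eq_le Q0 andbT.
  have : 2 * (quad M (fun x => h 0 x) - lam * nrm (fun x => h 0 x)) <= 0.
    by rewrite qi oppr_le0.
  by rewrite pmulr_rle0.
have Tz : Tsum M f (alpha a) = 0.
  by apply/eqP; rewrite -oppr_eq0 -qi Qz mulr0.
split => //.
  by move=> x y; apply: (Tsum_eq0 Redge alR Tz).
by exists b; split => //; apply: Qeq.
Qed.

End Core.

Section Comp.
Variables (R : realType) (n : nat) (M : 'M[R]_n).
Hypothesis HM : M^T = M.
Variable f : 'I_n -> R.

Definition Comps := [set [set y | connect (adj M) x y] | x : 'I_n].

Lemma ncompE : ncomp M = #|Comps|.
Proof. by []. Qed.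

Definition Bmx : 'M[R]_(#|Comps|, n) :=
  \matrix_(j, x) (if x \in (enum_val j : {set 'I_n}) then f x else 0).

Lemma connS : connect_sym (adj M).
Proof. by apply: sym_connect_sym => x y; rewrite (adj_sym HM). Qed.

Lemma sub_Bmx (h : 'rV[R]_n) (al : 'I_n -> R) : (forall x, h 0 x = al x * f x) ->
  (forall x y, f x != 0 -> f y != 0 -> connect (adj M) x y -> al x = al y) ->
  (h <= Bmx)%MS.
Proof.
move=> hE alc; apply/submxP.
pose be := \row_(j < #|Comps|) (if [pick x in (enum_val j : {set 'I_n}) | f x != 0] is Some x then al x else 0).
exists be; apply/rowP => x; rewrite hE mxE.
have [fx0|fx] := eqVneq (f x) 0.
  by rewrite fx0 mulr0 big1 // => j _; rewrite !mxE fx0; case: ifP => _; rewrite mulr0.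
have Kin : [set y | connect (adj M) x y] \in Comps by apply: imset_f.
rewrite (bigD1 (enum_rank_in Kin [set y | connect (adj M) x y])) //= big1.
  rewrite !mxE enum_rankK_in // inE connect0 addr0; congr (_ * _).
  case: pickP => [x' /andP[]|none]; last by have := none x; rewrite inE connect0 fx.
  by rewrite inE => cxx' fx'; apply: alc.
move=> j jn; rewrite !mxE; case: ifP => xin; last by rewrite mulr0.
case/eqP: jn; apply: enum_val_inj; rewrite enum_rankK_in //.
have := enum_valP j; case/imsetP => z _ ez; rewrite ez in xin *.
apply/setP => y; rewrite !inE; rewrite inE in xin.
have xz : connect (adj M) x z by rewrite connS.
by apply/idP/idP => hy; [exact: connect_trans xz hy | exact: connect_trans xin hy].
Qed.

Lemma ncomp1 (N : 'M[R]_n) : (0 < n)%N -> connectedG N -> ncomp N = 1%N.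
Proof.
move=> n0 cN; rewrite /ncomp (_ : [set _ | x : 'I_n] = [set setT]) ?cards1 //.
apply/setP => K; rewrite inE; apply/imsetP/eqP => [[x _ ->]|->].
  by apply/setP => y; rewrite !inE cN.
by exists (Ordinal n0) => //; apply/setP => y; rewrite !inE cN.
Qed.

End Comp.

Lemma exists_diag_gen (R : realType) n (M : 'M[R]_n) s : M^T = M ->
  char_poly M = \prod_(x <- s) ('X - x%:P) -> (0 < n)%N ->
  exists P : 'M[R]_n, exists D : 'rV[R]_n,
  [/\ P \in unitmx, P *m M = diag_mx D *m P &
      perm_eq s [seq D 0 i | i <- index_enum 'I_n]].
Proof. by case: n M => [//|n'] M HM Hc _; apply: exists_diag. Qed.

Lemma card_count (R : realType) n (D : 'rV[R]_n) (Q : pred R) s :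
  perm_eq s [seq D 0 i | i <- index_enum 'I_n] -> #|[set i | Q (D 0 i)]| = count Q s.
Proof.
move/permP => /(_ Q) ->; rewrite count_map cardsE cardE -deprecated_filter_index_enum.
by rewrite size_filter.
Qed.

Lemma Cap_eig (R : realType) n (M : 'M[R]_n) (HM : M^T = M) (f : 'I_n -> R) lam
  (P : 'M[R]_n) (D : 'rV[R]_n) (PM : P *m M = diag_mx D *m P)
  (h : 'rV[R]_n) al b : (forall x, h 0 x = al x * f x) -> h = b *m P ->
  (forall i, D 0 i != lam -> b 0 i = 0) ->
  forall z, \sum_y M z y * (al y * f y) = lam * (al z * f z).
Proof.
move=> hE hb bs z; have := vP_eig PM bs z.
have e : forall y, vP P b y = al y * f y by move=> y; rewrite -vPE -hb hE.
rewrite e => <-; apply: eq_bigr => y _; rewrite e (Msym HM); ring.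
Qed.

Unset Implicit Arguments.
Set Strict Implicit.

Theorem theorem4p1 (R : realType) (n : nat) (M : 'M[R]_n) (s : seq R)
  (k : nat) (fk : 'cV[R]_n) :
  M^T = M ->
  sorted <=%R s ->
  char_poly M = \prod_(x <- s) ('X - x%:P) ->
  (0 < k <= n)%N ->
  eigenfun M (nth 0 s k.-1) fk ->
  let r := count_mem (nth 0 s k.-1) s in
  let c := ncomp M in
  [/\ (nS M (vfun fk) <= k + r - 1)%N,
      (nW M (vfun fk) <= k + c - 1)%N,
      (connectedG M -> (nW M (vfun fk) <= k)%N) &
      (minimal_support M (nth 0 s k.-1) fk -> (nS M (vfun fk) <= k)%N)].
Proof.
move=> HM Hs Hc /andP[k0 kn] [fk0 Hfk] r c.
set lam := nth 0 s k.-1 in Hfk r *.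
set f := vfun fk.
have n0 : (0 < n)%N by apply: leq_trans kn.
have Hf : forall x, \sum_y M x y * f y = lam * f x.
  move=> x; have := congr1 (fun A : 'cV_n => A x 0) Hfk; rewrite !mxE => <-.
  by apply: eq_bigr.
have [P [D [Pu PM pe]]] := exists_diag_gen HM Hc n0.
have ss : size s = n.
  by have := size_char_poly M; rewrite Hc size_prod_XsubC => -[].
have cIeq : #|Ieq lam D| = r.
  by rewrite /Ieq (card_count (pred1 lam) pe).
have cIge : (n - k.-1 <= #|Ige lam D|)%N.
  rewrite /Ige (card_count (fun x => lam <= x) pe) -ss.
  rewrite -[in X in (_ <= X)%N](cat_take_drop k.-1 s) count_cat.
  apply: leq_trans (leq_addl _ _); rewrite -size_drop.
  rewrite (_ : count _ _ = size (drop k.-1 s)) //; apply/eqP; rewrite -all_count.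
  apply/allP => x /(nthP 0)[i hi <-]; rewrite nth_drop /lam.
  rewrite size_drop in hi.
  apply: (sorted_leq_nth le_trans lexx 0 Hs); rewrite ?inE.
  - by rewrite -subn_gt0 (leq_ltn_trans (leq0n _) hi).
  - by rewrite -ltn_subRL.
  - exact: leq_addr.
have RSr := @RS_refl R n M f.
have RSs := @RS_sym R n M f.
have RSt := @RS_trans R n M HM f.
have RSe := @RS_edge R n M f.
have RWr := @RW_refl R n M f.
have RWs := @RW_sym R n M f.
have RWt := @RW_trans R n M HM f.
have RWe := @RW_edge R n M f.
have nSE : nS M f = qn f (RS M f) by [].
have nWE : nW M f = qn f (RW M f) by [].
have strong : (qn f (RS M f) + #|Ige lam D| <= r + n)%N.
  apply: leq_trans (rank_Cap lam D Pu RSr RSs RSt) _.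
  rewrite leq_add2r -cIeq -(rank_Esub Pu); apply: mxrankS.
  apply/row_subP => i.
  have [al [_ _ _ [b [hb bs]]]] := Cap_row HM Hf Pu PM RSs RSt RSe (row_sub i _).
  by rewrite hb; apply: Esub_of => j; rewrite inE; apply: bs.
have weak : (qn f (RW M f) + #|Ige lam D| <= c + n)%N.
  apply: leq_trans (rank_Cap lam D Pu RWr RWs RWt) _.
  rewrite leq_add2r; apply: leq_trans (rank_leq_row (Bmx M f)); apply: mxrankS.
  apply/row_subP => i.
  have [al [hE alR aladj [b [hb bs]]]] := Cap_row HM Hf Pu PM RWs RWt RWe (row_sub i _).
  apply: (sub_Bmx HM hE) => x y fx fy cxy.
  exact: (conn_al HM Hf alR (Cap_eig HM PM hE hb bs) aladj fx fy cxy).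
split.
- by rewrite nSE; lia.
- by rewrite nWE; lia.
- move=> cG; rewrite nWE; move: weak; rewrite /c ncomp1 //; lia.
move=> ms; rewrite nSE leqNgt; apply/negP => gtk.
set Cp := Cap f lam P D (RS M f).
have r2 : (2 <= \rank Cp)%N.
  by have := rank_Cap lam D Pu RSr RSs RSt; rewrite -/Cp; lia.
pose phi : 'rV[R]_n := \row_x f x.
have [i hi] : exists i, ~~ (row i Cp <= phi)%MS.
  case: (boolP [forall i, row i Cp <= phi]%MS) => [/forallP al|/forallPn [i hi]]; last by exists i.
  have : (Cp <= phi)%MS by apply/row_subP => i; apply: al.
  by move/mxrankS; have := rank_leq_row phi; lia.
have [al [hE _ _ [b [hb bs]]]] := Cap_row HM Hf Pu PM RSs RSt RSe (row_sub i Cp).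
have Hh := Cap_eig HM PM hE hb bs.
have [x0 fx0] : exists x0, f x0 != 0.
  case: (pickP (fun x => f x != 0)) => [x0 h|none]; first by exists x0.
  case/negP: fk0; apply/eqP/matrixP => x j; rewrite (ord1 j) mxE.
  by have := none x; rewrite /f /vfun => /negbFE/eqP.
pose g := (row i Cp - al x0 *: phi)^T.
have hE' : forall x, Cp i x = al x * f x by move=> x; rewrite -hE mxE.
have gE : forall x, g x 0 = (al x - al x0) * f x.
  by move=> x; rewrite !mxE hE'; ring.
have geig : eigenfun M lam g.
  split.
    apply/negP => /eqP g0.
    have : row i Cp = al x0 *: phi.
      apply/eqP; rewrite -subr_eq0; apply/eqP/trmx_inj; rewrite trmx0.
      by rewrite -g0.
    by move=> e; move: hi; rewrite e scalemx_sub ?submx_refl.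
  apply/matrixP => x j; rewrite (ord1 j) !mxE.
  transitivity (\sum_y M x y * (al y * f y) - al x0 * \sum_y M x y * f y).
    rewrite mulr_sumr -sumrB; apply: eq_bigr => y _; rewrite gE; ring.
  by rewrite Hh Hf hE'; ring.
have gsub : supp g \subset supp fk.
  apply/subsetP => x; rewrite !inE gE mulf_eq0 negb_or => /andP[_].
  by rewrite /f /vfun.
have := ms g geig gsub => /setP/(_ x0); rewrite !inE gE subrr mul0r eqxx /=.
by move/esym; rewrite -[fk x0 0]/(f x0) (negbTE fx0).
Qed.
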